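(* Every factor-critical vertex-stable equimatchable graph is a complete graph on an odd number of vertices.
   Context: All graphs are finite and simple. A graph is equimatchable if all its maximal matchings have the same cardinality. A graph $G$ is vertex-stable equimatchable if $G$ is equimatchable and $G-v$ is equimatchable for every $v\in V(G)$. A graph $G$ is factor-critical if $G-v$ has a perfect matching for every $v\in V(G)$. *)

(* Defs.v *)
From mathcomp Require Import all_boot.
Set Implicit Arguments. Unset Strict Implicit. Unset Printing Implicit Defensive.

(* Subgraphs induced on a vertex set V : {set T}
   are used to express vertex deletion G - v (induced on V :\ v). *)

Section Graphs.
Variable T : finType.

Definition simple_graph (e : rel T) : Prop := symmetric e /\ irreflexive e.

Definition is_edge (e : rel T) (V : {set T}) (E : {set T}) : Prop :=
  exists x y, [/\ x \in V, y \in V, e x y & E = [set x; y]].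

Definition matching (e : rel T) (V : {set T}) (M : {set {set T}}) : Prop :=
  (forall E, E \in M -> is_edge e V E) /\
  (forall E F, E \in M -> F \in M -> E != F -> [disjoint E & F]).

Definition maximal_matching (e : rel T) (V : {set T}) (M : {set {set T}}) : Prop :=
  matching e V M /\ (forall M', matching e V M' -> M \subset M' -> M' = M).

Definition equimatchable (e : rel T) (V : {set T}) : Prop :=
  forall M1 M2, maximal_matching e V M1 -> maximal_matching e V M2 ->
    #|M1| = #|M2|.

Definition perfect_matching (e : rel T) (V : {set T}) (M : {set {set T}}) : Prop :=
  matching e V M /\ (forall x, x \in V -> exists2 E, E \in M & x \in E).

Definition vertex_stable_equimatchable (e : rel T) (V : {set T}) : Prop :=
  equimatchable e V /\ (forall v, v \in V -> equimatchable e (V :\ v)).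

Definition factor_critical (e : rel T) (V : {set T}) : Prop :=
  forall v, v \in V -> exists M, perfect_matching e (V :\ v) M.

Definition complete_on (e : rel T) (V : {set T}) : Prop :=
  forall x y, x \in V -> y \in V -> x != y -> e x y.

End Graphs.

(* Main.v *)
Require Import Defs.
From mathcomp Require Import all_boot.
From mathcomp Require Import zify.

Section Aux.
Variable T : finType.
Variable e : rel T.
Hypothesis esym : symmetric e.
Hypothesis eirr : irreflexive e.

Lemma perfect_card V P : perfect_matching e V P -> #|V| = 2 * #|P|.
Proof.
move=> [[Pe Pd] Pc].
rewrite mulnC; apply: card_uniform_partition.
  move=> E /Pe [a [b [_ _ eab ->]]]; rewrite cards2.
  by case: eqP eab => [->|]; rewrite ?eirr.
apply/and3P; split.
- rewrite eqEsubset; apply/andP; split.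
    apply/subsetP => z /bigcupP [E /Pe [a [b [aV bV _ ->]]]].
    by rewrite !inE => /orP[/eqP->|/eqP->].
  apply/subsetP => z /Pc [E EP zE]; apply/bigcupP; by exists E.
- apply/trivIsetP => A B AP BP AB; exact: Pd.
- apply/negP => /Pe [a [b [_ _ _ H]]].
  by move: (set21 a b); rewrite -H inE.
Qed.

Lemma maximal_of_cov V M : matching e V M ->
  (forall a b, a \in V -> b \in V -> e a b ->
     (exists2 F, F \in M & a \in F) \/ (exists2 F, F \in M & b \in F)) ->
  maximal_matching e V M.
Proof.
move=> Mm H; split=> // M' [M'e M'd] sub.
apply/eqP; rewrite eqEsubset andbC sub /=.
apply/subsetP => E EM'; case: (boolP (E \in M)) => // EnM; exfalso.
have [a [b [aV bV eab Edef]]] := M'e E EM'.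
have cov : forall z F, z \in E -> F \in M -> z \in F -> False.
  move=> z F zE FM zF.
  have FM' : F \in M' by apply: (subsetP sub).
  have FE : E != F by apply: contraNneq EnM => ->.
  by have := disjointFr (M'd E F EM' FM' FE) zE; rewrite zF.
case: (H a b aV bV eab) => [[F FM aF]|[F FM bF]].
  by apply: (cov a F) => //; rewrite Edef !inE eqxx.
by apply: (cov b F) => //; rewrite Edef !inE eqxx orbT.
Qed.

End Aux.

Theorem lemma7p3 (T : finType) (e : rel T) :
  simple_graph e -> 0 < #|T| ->
  factor_critical e [set: T] ->
  vertex_stable_equimatchable e [set: T] ->
  complete_on e [set: T] /\ odd #|T|.
Proof.
move=> [esym eirr] n0 fc [eq1 vse].
have cardD (v : T) : #|[set: T] :\ v| = #|T| - 1.
  by have := cardsD1 v [set: T]; rewrite in_setT cardsT /=; lia.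
have perfmax V P : perfect_matching e V P -> maximal_matching e V P.
  move=> [Pm Pc]; apply: maximal_of_cov => // a b aV _ _; left; exact: Pc.
split; last first.
  case: (pickP (fun _ : T => true)) => [v _|H]; last by rewrite (eq_card0 H) in n0.
  have [P PP] := fc v (in_setT v).
  have := @perfect_card _ _ eirr _ _ PP; rewrite cardD => h.
  have -> : #|T| = (2 * #|P|).+1 by lia.
  by rewrite /= mul2n odd_double.
move=> x y _ _ nxy.
case exy: (e x y) => //; exfalso.
have [N [[Nedge Ndisj] Ncov]] := fc x (in_setT x).
have yV : y \in [set: T] :\ x by rewrite !inE eq_sym nxy.
have [E EN yE] := Ncov y yV.
have [a [b [aV bV eab Edef]]] := Nedge E EN.
have [u [Edef' eyu uV]] : exists u, [/\ E = [set y; u], e y u & u \in [set: T] :\ x].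
  move: yE; rewrite Edef !inE => /orP [/eqP->|/eqP->].
    by exists b.
  by exists a; rewrite setUC esym.
have uy : u != y by apply/eqP => uy; move: eyu; rewrite uy eirr.
have [P PP] := fc u (in_setT u).
set M := N :\ E.
have Mm : matching e ([set: T] :\ u) M.
  split.
    move=> F; rewrite in_setD1 => /andP [FE FN].
    have [c [d [cV dV ecd Fdef]]] := Nedge F FN.
    have dis := Ndisj F E FN EN FE.
    have nu z : z \in F -> z \in [set: T] :\ u.
      move=> zF; rewrite !inE andbT; apply/eqP => zu.
      by have := disjointFr dis zF; rewrite Edef' zu !inE eqxx orbT.
    exists c, d; split => //; [apply: nu | apply: nu]; by rewrite Fdef !inE eqxx ?orbT.
  move=> F G; rewrite !in_setD1 => /andP [_ FN] /andP [_ GN]; exact: Ndisj.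
have cov z : z \in [set: T] :\ u -> z != x -> z != y -> exists2 F, F \in M & z \in F.
  move=> zu zx zy.
  have zV : z \in [set: T] :\ x by rewrite !inE zx.
  have [F FN zF] := Ncov z zV.
  exists F => //; rewrite in_setD1 FN andbT; apply/eqP => FE.
  by move: zF; rewrite FE Edef' !inE (negbTE zy); move: zu; rewrite !inE andbT => /negbTE ->.
have Mmax : maximal_matching e ([set: T] :\ u) M.
  apply: maximal_of_cov => // a' b' aV' bV' eab'.
  case: (boolP ((a' != x) && (a' != y))) => [/andP[h1 h2]|ha]; first by left; exact: cov.
  case: (boolP ((b' != x) && (b' != y))) => [/andP[h1 h2]|hb]; first by right; exact: cov.
  exfalso; move: eab'.
  move: ha hb; rewrite !negb_and !negbK => /orP[/eqP->|/eqP->] /orP[/eqP->|/eqP->];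
    by rewrite ?eirr ?exy // esym exy.
have eqMP := vse u (in_setT u) M P Mmax (perfmax _ _ PP).
have hN := @perfect_card _ _ eirr _ _ (conj (conj Nedge Ndisj) Ncov).
have hP := @perfect_card _ _ eirr _ _ PP.
have hM := cardsD1 E N; rewrite EN in hM.
rewrite !cardD in hN hP.
rewrite -/M in hM; lia.
Qed.
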